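(* Let $X=\bigsqcup_{\lambda\in\Lambda}G_\lambda$ be an MCQ, $R$ a ring, $M$ a left $R$-module, and let $(f_1,f_2,f_3,f_4;\phi_1,\phi_2)$ be a 6-tuple of maps ($f_1,f_2:X\times X\to R$, $f_3,f_4:\bigsqcup_\lambda(G_\lambda\times G_\lambda)\to R$, $\phi_1:X\times X\to M$, $\phi_2:\bigsqcup_\lambda(G_\lambda\times G_\lambda)\to M$) satisfying conditions (0-i)–(4-$\phi$). Define $g_1,g_2:X\times X\to R$, $\psi_1:X\times X\to M$, $\psi_2:\bigsqcup_\lambda(G_\lambda\times G_\lambda)\to M$ by $g_1(x,y)=f_1(e_x,y)$, $g_2(x,y)=f_3(x\triangleleft y,\,x^{-1}\triangleleft y)\,f_2(x,y)\,f_3(e_y,y)$, $\psi_1(x,y)=f_3(x\triangleleft y,\,x^{-1}\triangleleft y)\,\phi_1(x,y)$, $\psi_2(a,b)=f_3(ab,\,b^{-1}a^{-1})\,\phi_2(a,b)$. Then $(g_1,g_2;\psi_1,\psi_2)$ is an augmented MCQ Alexander pair.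
   Context: A multiple conjugation quandle (MCQ) is a set $X=\bigsqcup_{\lambda\in\Lambda}G_\lambda$ that is a disjoint union of groups $G_\lambda$, together with a binary operation $\triangleleft:X\times X\to X$ such that: (i) for all $a,b\in G_\lambda$, $a\triangleleft b=b^{-1}ab$; (ii) for all $x\in X$ and $a,b\in G_\lambda$, $x\triangleleft e_\lambda=x$ and $x\triangleleft(ab)=(x\triangleleft a)\triangleleft b$, where $e_\lambda$ is the identity of $G_\lambda$; (iii) for all $x,y,z\in X$, $(x\triangleleft y)\triangleleft z=(x\triangleleft z)\triangleleft(y\triangleleft z)$; (iv) for all $x\in X$ and $a,b\in G_\lambda$, the elements $a\triangleleft x$ and $b\triangleleft x$ lie in a common group $G_\mu$ and $(ab)\triangleleft x=(a\triangleleft x)(b\triangleleft x)$. For $x\in X$, $G_x$ denotes the group containing $x$, $e_x$ its identity, $x^{-1}$ the inverse of $x$ in $G_x$. $\bigsqcup_{\lambda}(G_\lambda\times G_\lambda)$ is the set of pairs of elements lying in a common group $G_\lambda$. Rings have a multiplicative identity $1\neq0$ and need not be commutative. Conditions (0-i)–(4-$\phi$) on a 6-tuple $(f_1,f_2,f_3,f_4;\phi_1,\phi_2)$: For all $\lambda$ and $a,b,c\in G_\lambda$: (0-i) $f_3(a,b)$, $f_4(a,b)$ invertible; (0-ii) $f_3(ab,c)f_3(a,b)=f_3(a,bc)$; (0-iii) $f_3(ab,c)f_4(a,b)=f_4(a,bc)f_3(b,c)$; (0-iv) $f_4(ab,c)=f_4(a,bc)f_4(b,c)$; (0-$\phi$)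 $f_3(ab,c)\phi_2(a,b)+\phi_2(ab,c)=f_4(a,bc)\phi_2(b,c)+\phi_2(a,bc)$. For all $a,b\in G_\lambda$: (1-i) $f_1(a,b)=f_4(b^{-1},ab)f_3(a,b)$; (1-ii) $f_3(b,b^{-1}ab)+f_4(b,b^{-1}ab)f_2(a,b)=f_4(a,b)$; (1-$\phi$) $f_4(b,b^{-1}ab)\phi_1(a,b)+\phi_2(b,b^{-1}ab)=\phi_2(a,b)$. For all $x\in X$, $a,b\in G_\lambda$: (2-i) $f_1(x,e_\lambda)=1$; (2-ii) $f_1(x,ab)=f_1(x\triangleleft a,b)f_1(x,a)$; (2-iii) $f_2(x,ab)f_3(a,b)=f_1(x\triangleleft a,b)f_2(x,a)$; (2-iv) $f_2(x,ab)f_4(a,b)=f_2(x\triangleleft a,b)$; (2-$\phi$i) $f_2(x,e_\lambda)\phi_2(e_\lambda,e_\lambda)=\phi_1(x,e_\lambda)$; (2-$\phi$ii) $f_2(x,ab)\phi_2(a,b)+\phi_1(x,ab)=f_1(x\triangleleft a,b)\phi_1(x,a)+\phi_1(x\triangleleft a,b)$. For all $x,y,z\in X$: (3-i) $f_1(x\triangleleft y,z)f_1(x,y)=f_1(x\triangleleft z,y\triangleleft z)f_1(x,z)$; (3-ii) $f_1(x\triangleleft y,z)f_2(x,y)=f_2(x\triangleleft z,y\triangleleft z)f_1(y,z)$; (3-iii) $f_2(x\triangleleft y,z)=f_1(x\triangleleft z,y\triangleleft z)f_2(x,z)+f_2(x\triangleleft z,y\triangleleft z)f_2(y,z)$; (3-$\phi$)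 $f_1(x\triangleleft y,z)\phi_1(x,y)+\phi_1(x\triangleleft y,z)=f_1(x\triangleleft z,y\triangleleft z)\phi_1(x,z)+f_2(x\triangleleft z,y\triangleleft z)\phi_1(y,z)+\phi_1(x\triangleleft z,y\triangleleft z)$. For all $a,b\in G_\lambda$, $x\in X$: (4-i) $f_1(ab,x)f_3(a,b)=f_3(a\triangleleft x,b\triangleleft x)f_1(a,x)$; (4-ii) $f_1(ab,x)f_4(a,b)=f_4(a\triangleleft x,b\triangleleft x)f_1(b,x)$; (4-iii) $f_2(ab,x)=f_3(a\triangleleft x,b\triangleleft x)f_2(a,x)+f_4(a\triangleleft x,b\triangleleft x)f_2(b,x)$; (4-$\phi$) $f_1(ab,x)\phi_2(a,b)+\phi_1(ab,x)=f_3(a\triangleleft x,b\triangleleft x)\phi_1(a,x)+f_4(a\triangleleft x,b\triangleleft x)\phi_1(b,x)+\phi_2(a\triangleleft x,b\triangleleft x)$. An MCQ Alexander pair is a pair of maps $g_1,g_2:X\times X\to R$ such that: (A1) for all $a,b\in G_\lambda$: $g_1(a,b)+g_2(a,b)=g_1(a,a^{-1}b)$; (A2) for all $a,b\in G_\lambda$, $x\in X$: $g_1(a,x)=g_1(b,x)$ and $g_2(ab,x)=g_2(a,x)+g_1(b\triangleleft x,a^{-1}\triangleleft x)g_2(b,x)$; (A3) for all $x\in X$, $a,b\in G_\lambda$: $g_1(x,e_\lambda)=1$, $g_1(x,ab)=g_1(x\triangleleft a,b)g_1(x,a)$, $g_2(x,ab)=g_1(x\triangleleft a,b)g_2(x,a)$;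 (A4) for all $x,y,z\in X$: $g_1(x\triangleleft y,z)g_1(x,y)=g_1(x\triangleleft z,y\triangleleft z)g_1(x,z)$; $g_1(x\triangleleft y,z)g_2(x,y)=g_2(x\triangleleft z,y\triangleleft z)g_1(y,z)$; $g_2(x\triangleleft y,z)=g_1(x\triangleleft z,y\triangleleft z)g_2(x,z)+g_2(x\triangleleft z,y\triangleleft z)g_2(y,z)$. For an MCQ Alexander pair $(g_1,g_2)$, a $(g_1,g_2)$-twisted 2-cocycle is a pair $\psi_1:X\times X\to M$, $\psi_2:\bigsqcup_\lambda(G_\lambda\times G_\lambda)\to M$ with: (T1) for $a,b,c\in G_\lambda$: $\psi_2(a,b)+\psi_2(ab,c)=g_1(a,a^{-1})\psi_2(b,c)+\psi_2(a,bc)$; (T2) for $a,b\in G_\lambda$: $g_1(b,b^{-1})\psi_1(a,b)+\psi_2(b,b^{-1}ab)=\psi_2(a,b)$; (T3) for $x\in X$, $a,b\in G_\lambda$: $g_2(x,ab)\psi_2(a,b)+\psi_1(x,ab)=g_1(x\triangleleft a,b)\psi_1(x,a)+\psi_1(x\triangleleft a,b)$; (T4) for $x,y,z\in X$: $g_1(x\triangleleft y,z)\psi_1(x,y)+\psi_1(x\triangleleft y,z)=g_1(x\triangleleft z,y\triangleleft z)\psi_1(x,z)+g_2(x\triangleleft z,y\triangleleft z)\psi_1(y,z)+\psi_1(x\triangleleft z,y\triangleleft z)$; (T5) for $a,b\in G_\lambda$, $x\in X$: $g_1(ab,x)\psi_2(a,b)+\psi_1(ab,x)=\psi_1(a,x)+g_1(a\triangleleft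 x,a^{-1}\triangleleft x)\psi_1(b,x)+\psi_2(a\triangleleft x,b\triangleleft x)$. $(g_1,g_2;\psi_1,\psi_2)$ is an augmented MCQ Alexander pair if $(g_1,g_2)$ is an MCQ Alexander pair and $(\psi_1,\psi_2)$ is a $(g_1,g_2)$-twisted 2-cocycle. *)

(* Defs.v *)
From HB Require Import structures.
From mathcomp Require Import all_boot all_order all_algebra.
Set Implicit Arguments. Unset Strict Implicit. Unset Printing Implicit Defensive.
Import GRing.Theory.
Local Open Scope ring_scope.

(* A multiple conjugation quandle X = disjoint union of groups G_l, l : L.
   The carrier is [car]; [qlab x] is the index l with x in G_l.
   Group operations [qmul], [qinv] are total functions on the carrier but
   only their values on elements of a common group are meaningful/constrained. *)
Record MCQ := {
  car : Type;
  lbl : Type;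
  qlab : car -> lbl;
  qe : lbl -> car;
  qmul : car -> car -> car;
  qinv : car -> car;
  qop : car -> car -> car;
  lab_unit : forall l, qlab (qe l) = l;
  lab_mul : forall a b, qlab a = qlab b -> qlab (qmul a b) = qlab a;
  lab_inv : forall a, qlab (qinv a) = qlab a;
  mulA : forall a b c, qlab a = qlab b -> qlab b = qlab c ->
           qmul (qmul a b) c = qmul a (qmul b c);
  mul1g : forall a, qmul (qe (qlab a)) a = a;
  mulg1 : forall a, qmul a (qe (qlab a)) = a;
  mulVg : forall a, qmul (qinv a) a = qe (qlab a);
  mulgV : forall a, qmul a (qinv a) = qe (qlab a);
  mcq_i : forall a b, qlab a = qlab b -> qop a b = qmul (qmul (qinv b) a) b;
  mcq_ii1 : forall x l, qop x (qe l) = x;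
  mcq_ii2 : forall x a b, qlab a = qlab b -> qop x (qmul a b) = qop (qop x a) b;
  mcq_iii : forall x y z, qop (qop x y) z = qop (qop x z) (qop y z);
  mcq_iv1 : forall x a b, qlab a = qlab b -> qlab (qop a x) = qlab (qop b x);
  mcq_iv2 : forall x a b, qlab a = qlab b -> qop (qmul a b) x = qmul (qop a x) (qop b x)
}.

Section Defs.
Variable X : MCQ.
Local Notation "x <| y" := (qop x y) (at level 40, left associativity).
Local Notation "a * b" := (qmul a b) : mcq_scope.
Local Notation e x := (qe (qlab x)).
Local Notation "x ^-1" := (qinv x) : mcq_scope.
Declare Scope mcq_scope.
Delimit Scope mcq_scope with q.

Definition invertible (R : nzRingType) (r : R) := exists s : R, s * r = 1 /\ r * s = 1.

Variables (R : nzRingType) (M : lmodType R).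
(* maps on the disjoint union of the G_l x G_l are represented as maps
   car -> car -> _, only evaluated at pairs in a common group *)
Variables (f1 f2 f3 f4 : car X -> car X -> R) (phi1 phi2 : car X -> car X -> M).

Definition six_tuple_conditions : Prop :=
  (* (0-i) - (0-phi) *)
  (forall a b, qlab a = qlab b -> invertible (f3 a b) /\ invertible (f4 a b)) /\
  (forall a b c, qlab a = qlab b -> qlab b = qlab c ->
     f3 (a * b)%q c * f3 a b = f3 a (b * c)%q) /\
  (forall a b c, qlab a = qlab b -> qlab b = qlab c ->
     f3 (a * b)%q c * f4 a b = f4 a (b * c)%q * f3 b c) /\
  (forall a b c, qlab a = qlab b -> qlab b = qlab c ->
     f4 (a * b)%q c = f4 a (b * c)%q * f4 b c) /\
  (forall a b c, qlab a = qlab b -> qlab b = qlab c ->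
     f3 (a * b)%q c *: phi2 a b + phi2 (a * b)%q c
     = f4 a (b * c)%q *: phi2 b c + phi2 a (b * c)%q) /\
  (* (1-i) - (1-phi) *)
  (forall a b, qlab a = qlab b -> f1 a b = f4 (b^-1)%q (a * b)%q * f3 a b) /\
  (forall a b, qlab a = qlab b ->
     f3 b ((b^-1 * a) * b)%q + f4 b ((b^-1 * a) * b)%q * f2 a b = f4 a b) /\
  (forall a b, qlab a = qlab b ->
     f4 b ((b^-1 * a) * b)%q *: phi1 a b + phi2 b ((b^-1 * a) * b)%q = phi2 a b) /\
  (* (2-i) - (2-phi ii) *)
  (forall x l, f1 x (qe l) = 1) /\
  (forall x a b, qlab a = qlab b -> f1 x (a * b)%q = f1 (x <| a) b * f1 x a) /\
  (forall x a b, qlab a = qlab b ->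
     f2 x (a * b)%q * f3 a b = f1 (x <| a) b * f2 x a) /\
  (forall x a b, qlab a = qlab b -> f2 x (a * b)%q * f4 a b = f2 (x <| a) b) /\
  (forall x l, f2 x (qe l) *: phi2 (qe l) (qe l) = phi1 x (qe l)) /\
  (forall x a b, qlab a = qlab b ->
     f2 x (a * b)%q *: phi2 a b + phi1 x (a * b)%q
     = f1 (x <| a) b *: phi1 x a + phi1 (x <| a) b) /\
  (* (3-i) - (3-phi) *)
  (forall x y z, f1 (x <| y) z * f1 x y = f1 (x <| z) (y <| z) * f1 x z) /\
  (forall x y z, f1 (x <| y) z * f2 x y = f2 (x <| z) (y <| z) * f1 y z) /\
  (forall x y z, f2 (x <| y) z
     = f1 (x <| z) (y <| z) * f2 x z + f2 (x <| z) (y <| z) * f2 y z) /\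
  (forall x y z, f1 (x <| y) z *: phi1 x y + phi1 (x <| y) z
     = f1 (x <| z) (y <| z) *: phi1 x z + f2 (x <| z) (y <| z) *: phi1 y z
       + phi1 (x <| z) (y <| z)) /\
  (* (4-i) - (4-phi) *)
  (forall a b x, qlab a = qlab b ->
     f1 (a * b)%q x * f3 a b = f3 (a <| x) (b <| x) * f1 a x) /\
  (forall a b x, qlab a = qlab b ->
     f1 (a * b)%q x * f4 a b = f4 (a <| x) (b <| x) * f1 b x) /\
  (forall a b x, qlab a = qlab b ->
     f2 (a * b)%q x = f3 (a <| x) (b <| x) * f2 a x + f4 (a <| x) (b <| x) * f2 b x) /\
  (forall a b x, qlab a = qlab b ->
     f1 (a * b)%q x *: phi2 a b + phi1 (a * b)%q x
     = f3 (a <| x) (b <| x) *: phi1 a x + f4 (a <| x) (b <| x) *: phi1 b x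
       + phi2 (a <| x) (b <| x)).

End Defs.

Section Alex.
Variable X : MCQ.
Local Notation "x <| y" := (qop x y) (at level 40, left associativity).
Local Notation "a * b" := (qmul a b) : mcq_scope.
Local Notation "x ^-1" := (qinv x) : mcq_scope.
Delimit Scope mcq_scope with q.
Variables (R : nzRingType) (M : lmodType R).

Definition MCQ_Alexander_pair (g1 g2 : car X -> car X -> R) : Prop :=
  (* (A1) *)
  (forall a b, qlab a = qlab b -> g1 a b + g2 a b = g1 a (a^-1 * b)%q) /\
  (* (A2) *)
  (forall a b x, qlab a = qlab b -> g1 a x = g1 b x) /\
  (forall a b x, qlab a = qlab b ->
     g2 (a * b)%q x = g2 a x + g1 (b <| x) (a^-1 <| x)%q * g2 b x) /\
  (* (A3) *)
  (forall x l, g1 x (qe l) = 1) /\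
  (forall x a b, qlab a = qlab b -> g1 x (a * b)%q = g1 (x <| a) b * g1 x a) /\
  (forall x a b, qlab a = qlab b -> g2 x (a * b)%q = g1 (x <| a) b * g2 x a) /\
  (* (A4) *)
  (forall x y z, g1 (x <| y) z * g1 x y = g1 (x <| z) (y <| z) * g1 x z) /\
  (forall x y z, g1 (x <| y) z * g2 x y = g2 (x <| z) (y <| z) * g1 y z) /\
  (forall x y z, g2 (x <| y) z
     = g1 (x <| z) (y <| z) * g2 x z + g2 (x <| z) (y <| z) * g2 y z).

Definition twisted_2_cocycle (g1 g2 : car X -> car X -> R)
  (psi1 psi2 : car X -> car X -> M) : Prop :=
  (* (T1) *)
  (forall a b c, qlab a = qlab b -> qlab b = qlab c ->
     psi2 a b + psi2 (a * b)%q c = g1 a (a^-1)%q *: psi2 b c + psi2 a (b * c)%q) /\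
  (* (T2) *)
  (forall a b, qlab a = qlab b ->
     g1 b (b^-1)%q *: psi1 a b + psi2 b ((b^-1 * a) * b)%q = psi2 a b) /\
  (* (T3) *)
  (forall x a b, qlab a = qlab b ->
     g2 x (a * b)%q *: psi2 a b + psi1 x (a * b)%q
     = g1 (x <| a) b *: psi1 x a + psi1 (x <| a) b) /\
  (* (T4) *)
  (forall x y z, g1 (x <| y) z *: psi1 x y + psi1 (x <| y) z
     = g1 (x <| z) (y <| z) *: psi1 x z + g2 (x <| z) (y <| z) *: psi1 y z
       + psi1 (x <| z) (y <| z)) /\
  (* (T5) *)
  (forall a b x, qlab a = qlab b ->
     g1 (a * b)%q x *: psi2 a b + psi1 (a * b)%q x
     = psi1 a x + g1 (a <| x) (a^-1 <| x)%q *: psi1 b x + psi2 (a <| x) (b <| x)).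

Definition augmented_MCQ_Alexander_pair (g1 g2 : car X -> car X -> R)
  (psi1 psi2 : car X -> car X -> M) : Prop :=
  MCQ_Alexander_pair g1 g2 /\ twisted_2_cocycle g1 g2 psi1 psi2.

End Alex.

(* Main.v *)
Require Import Defs.
From mathcomp Require Import all_boot all_order all_algebra.
Import GRing.Theory.
Local Open Scope ring_scope.

Section G.
Context {X : MCQ}.
Notation e x := (qe (qlab x)).

Lemma lab_e (x : car X) : qlab (e x) = qlab x.
Proof. exact: lab_unit. Qed.

Lemma idem_e (y : car X) : qmul y y = y -> y = e y.
Proof.
move=> H.
rewrite -(Defs.mulVg y).
have -> : qmul (qinv y) y = qmul (qinv y) (qmul y y) by rewrite H.
by rewrite -Defs.mulA ?lab_inv // Defs.mulVg Defs.mul1g.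
Qed.

Lemma e_op (x y : car X) : qop (e x) y = e (qop x y).
Proof.
have H1 : qmul (qop (e x) y) (qop (e x) y) = qop (e x) y.
  have Ee : qmul (e x) (e x) = e x by have := Defs.mul1g (e x); rewrite lab_unit.
  by rewrite -mcq_iv2 // Ee.
rewrite {1}(idem_e _ H1); congr qe; apply: mcq_iv1; exact: lab_e.
Qed.

Lemma lab_op_inv (x y : car X) : qlab (qop (qinv x) y) = qlab (qop x y).
Proof. apply: mcq_iv1; exact: lab_inv. Qed.

Lemma op_mulV (x y : car X) : qmul (qop x y) (qop (qinv x) y) = e (qop x y).
Proof. rewrite -mcq_iv2; last by rewrite lab_inv. by rewrite Defs.mulgV e_op. Qed.

Lemma inv_uniq (x y : car X) : qlab x = qlab y -> qmul x y = e x -> qinv x = y.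
Proof.
move=> Hl H.
have -> : qinv x = qmul (qinv x) (qmul x y).
  by rewrite H -(lab_inv x) Defs.mulg1.
by rewrite -Defs.mulA ?lab_inv // Defs.mulVg Hl Defs.mul1g.
Qed.

Lemma invK (a : car X) : qinv (qinv a) = a.
Proof. by apply: inv_uniq; rewrite ?lab_inv // Defs.mulVg. Qed.

Lemma inv_op_inv (a x : car X) : qinv (qop (qinv a) x) = qop a x.
Proof.
apply: inv_uniq; first by rewrite lab_op_inv.
rewrite -mcq_iv2; last exact: lab_inv.
by rewrite Defs.mulVg e_op lab_op_inv.
Qed.

Ltac normlab := repeat (rewrite lab_inv || rewrite lab_unit ||
   (rewrite lab_mul; [| solve [normlab; congruence]])).
Ltac lab := solve [normlab; congruence].

Lemma inv_mulV (a b : car X) : qlab a = qlab b ->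
  qinv (qmul (qinv a) b) = qmul (qinv b) a.
Proof.
move=> Hab; apply: inv_uniq; first by lab.
rewrite (@Defs.mulA _ (qinv a) b); try lab.
rewrite -(@Defs.mulA _ b (qinv b) a); try lab.
rewrite Defs.mulgV -Hab Defs.mul1g Defs.mulVg.
congr qe; lab.
Qed.

Lemma conj_mul (a b : car X) : qlab a = qlab b ->
  qmul b (qmul (qmul (qinv b) a) b) = qmul a b.
Proof.
move=> Hab.
rewrite -(@Defs.mulA _ b (qmul (qinv b) a) b); try lab.
rewrite -(@Defs.mulA _ b (qinv b) a); try lab.
by rewrite Defs.mulgV -Hab Defs.mul1g.
Qed.

Lemma mulVmul (a b : car X) : qlab a = qlab b ->
  qmul (qmul a b) (qmul (qinv b) (qinv a)) = e (qmul a b).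
Proof.
move=> Hab.
rewrite (@Defs.mulA _ a b); try lab.
rewrite -(@Defs.mulA _ b (qinv b) (qinv a)); try lab.
rewrite Defs.mulgV -Hab -(lab_inv a) Defs.mul1g Defs.mulgV.
congr qe; lab.
Qed.
Lemma ee (x : car X) : qmul (e x) (e x) = e x.
Proof. by have := Defs.mul1g (e x); rewrite lab_unit. Qed.
End G.

Section Ring.
Variables (X : MCQ) (R : nzRingType) (M : lmodType R).
Variables (f1 f2 f3 f4 : car X -> car X -> R) (phi1 phi2 : car X -> car X -> M).
Hypothesis H : six_tuple_conditions f1 f2 f3 f4 phi1 phi2.
Let h0i := (proj1 H).
Let h0ii := (proj1 (proj2 H)).
Let h0iii := (proj1 (proj2 (proj2 H))).
Let h0iv := (proj1 (proj2 (proj2 (proj2 H)))).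
Let h0phi := (proj1 (proj2 (proj2 (proj2 (proj2 H))))).
Let h1i := (proj1 (proj2 (proj2 (proj2 (proj2 (proj2 H)))))).
Let h1ii := (proj1 (proj2 (proj2 (proj2 (proj2 (proj2 (proj2 H))))))).
Let h1phi := (proj1 (proj2 (proj2 (proj2 (proj2 (proj2 (proj2 (proj2 H)))))))).
Let h2i := (proj1 (proj2 (proj2 (proj2 (proj2 (proj2 (proj2 (proj2 (proj2 H))))))))).
Let h2ii := (proj1 (proj2 (proj2 (proj2 (proj2 (proj2 (proj2 (proj2 (proj2 (proj2 H)))))))))).
Let h2iii := (proj1 (proj2 (proj2 (proj2 (proj2 (proj2 (proj2 (proj2 (proj2 (proj2 (proj2 H))))))))))).
Let h2iv := (proj1 (proj2 (proj2 (proj2 (proj2 (proj2 (proj2 (proj2 (proj2 (proj2 (proj2 (proj2 H)))))))))))).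
Let h2phi1 := (proj1 (proj2 (proj2 (proj2 (proj2 (proj2 (proj2 (proj2 (proj2 (proj2 (proj2 (proj2 (proj2 H))))))))))))).
Let h2phi2 := (proj1 (proj2 (proj2 (proj2 (proj2 (proj2 (proj2 (proj2 (proj2 (proj2 (proj2 (proj2 (proj2 (proj2 H)))))))))))))).
Let h3i := (proj1 (proj2 (proj2 (proj2 (proj2 (proj2 (proj2 (proj2 (proj2 (proj2 (proj2 (proj2 (proj2 (proj2 (proj2 H))))))))))))))).
Let h3ii := (proj1 (proj2 (proj2 (proj2 (proj2 (proj2 (proj2 (proj2 (proj2 (proj2 (proj2 (proj2 (proj2 (proj2 (proj2 (proj2 H)))))))))))))))).
Let h3iii := (proj1 (proj2 (proj2 (proj2 (proj2 (proj2 (proj2 (proj2 (proj2 (proj2 (proj2 (proj2 (proj2 (proj2 (proj2 (proj2 (proj2 H))))))))))))))))).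
Let h3phi := (proj1 (proj2 (proj2 (proj2 (proj2 (proj2 (proj2 (proj2 (proj2 (proj2 (proj2 (proj2 (proj2 (proj2 (proj2 (proj2 (proj2 (proj2 H)))))))))))))))))).
Let h4i := (proj1 (proj2 (proj2 (proj2 (proj2 (proj2 (proj2 (proj2 (proj2 (proj2 (proj2 (proj2 (proj2 (proj2 (proj2 (proj2 (proj2 (proj2 (proj2 H))))))))))))))))))).
Let h4ii := (proj1 (proj2 (proj2 (proj2 (proj2 (proj2 (proj2 (proj2 (proj2 (proj2 (proj2 (proj2 (proj2 (proj2 (proj2 (proj2 (proj2 (proj2 (proj2 (proj2 H)))))))))))))))))))).
Let h4iii := (proj1 (proj2 (proj2 (proj2 (proj2 (proj2 (proj2 (proj2 (proj2 (proj2 (proj2 (proj2 (proj2 (proj2 (proj2 (proj2 (proj2 (proj2 (proj2 (proj2 (proj2 H))))))))))))))))))))).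
Let h4phi := (proj2 (proj2 (proj2 (proj2 (proj2 (proj2 (proj2 (proj2 (proj2 (proj2 (proj2 (proj2 (proj2 (proj2 (proj2 (proj2 (proj2 (proj2 (proj2 (proj2 (proj2 H))))))))))))))))))))).
Notation e x := (qe (qlab x)).
Ltac normlab := repeat (rewrite lab_inv || rewrite lab_unit ||
   (rewrite lab_mul; [| solve [normlab; congruence]])).
Ltac lab := solve [normlab; congruence].

Definition u z := f3 (e z) z.
Definition v z := f3 z (qinv z).

Lemma uE z : f3 (e z) z = u z. Proof. by []. Qed.

Lemma inv_one (r : R) : invertible r -> r * r = r -> r = 1.
Proof.
move=> [s [Hs1 Hs2]] Hr.
by rewrite -Hs1 -{2}Hr mulrA Hs1 mul1r.
Qed.

Lemma f3ee x : f3 (e x) (e x) = 1.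
Proof.
apply: inv_one; first by case: (h0i (e x) (e x) erefl).
have := h0ii (e x) (e x) (e x) erefl erefl.
by rewrite ee.
Qed.

Lemma u_e x : u (e x) = 1.
Proof. by rewrite /u lab_unit f3ee. Qed.

Lemma vu z : v z * u z = 1.
Proof.
have := h0ii (e z) z (qinv z) (lab_e z) (esym (lab_inv z)).
by rewrite Defs.mul1g Defs.mulgV f3ee.
Qed.

Lemma uv z : u z * v z = 1.
Proof.
have [s [Hs1 Hs2]] := proj1 (h0i (e z) z (lab_e z)).
have Hv : v z = s by rewrite -(mulr1 (v z)) -Hs2 mulrA vu mul1r.
by rewrite Hv -/(u z) in Hs2 *.
Qed.

Lemma uvK r z : r * u z * v z = r. Proof. by rewrite -mulrA uv mulr1. Qed.
Lemma vuK r z : r * v z * u z = r. Proof. by rewrite -mulrA vu mulr1. Qed.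

Lemma f3E a b : qlab a = qlab b -> f3 a b = u (qmul a b) * v a.
Proof.
move=> Hab.
have := h0ii (e a) a b (lab_e a) Hab.
rewrite Defs.mul1g uE.
have -> : e a = e (qmul a b) by rewrite lab_mul.
rewrite uE => <-; by rewrite uvK.
Qed.

Definition k_def a := v a * f4 a (e a).
Fact k_key : unit. Proof. exact: tt. Qed.
Definition k := locked_with k_key k_def.
Lemma kE a : k a = v a * f4 a (e a). Proof. by rewrite /k unlock. Qed.

Lemma f4E a b : qlab a = qlab b -> f4 a b = u (qmul a b) * k a * v b.
Proof.
move=> Hab.
have := h0iii a (e a) b (esym (lab_e a)) (etrans (lab_e a) Hab).
rewrite Defs.mulg1 Hab Defs.mul1g uE -Hab f3E //.
move=> E; by rewrite kE !mulrA E uvK.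
Qed.

Lemma v_e x : v (e x) = 1.
Proof. by have := vu (e x); rewrite u_e mulr1. Qed.

Lemma k_e x : k (e x) = 1.
Proof.
rewrite kE v_e mul1r lab_unit.
apply: inv_one; first by case: (h0i (e x) (e x) erefl).
have := h0iv (e x) (e x) (e x) erefl erefl.
by rewrite ee => <-.
Qed.

Lemma kM a b : qlab a = qlab b -> k (qmul a b) = k a * k b.
Proof.
move=> Hab.
have E := h0iv a b (e b) Hab (esym (lab_e b)).
rewrite Defs.mulg1 in E.
rewrite !kE (lab_mul Hab) Hab E f4E // kE !mulrA vu mul1r.
by rewrite Hab.
Qed.

Lemma kVk b : k (qinv b) * k b = 1.
Proof. by rewrite -kM ?lab_inv // Defs.mulVg k_e. Qed.

Lemma K1 a b : qlab a = qlab b -> f1 (e a) b = k (qinv b).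
Proof.
move=> Hab; rewrite Hab.
rewrite (h1i (e b) b (lab_e b)) Defs.mul1g uE f4E ?lab_inv //.
by rewrite Defs.mulVg u_e mul1r vuK.
Qed.

Lemma G1 x y : f1 (e x) y = v (qop x y) * f1 x y * u x.
Proof.
have E := h4i (e x) x y (lab_e x).
rewrite Defs.mul1g uE e_op uE in E.
by rewrite -mulrA E mulrA vu mul1r.
Qed.

Lemma UE x y : f3 (qop x y) (qop (qinv x) y) = v (qop x y).
Proof. by rewrite f3E ?lab_op_inv // op_mulV u_e mul1r. Qed.

Lemma WE a b : qlab a = qlab b -> f3 (qmul a b) (qmul (qinv b) (qinv a)) = v (qmul a b).
Proof.
move=> Hab; rewrite f3E; last by rewrite !lab_mul ?lab_inv.
by rewrite mulVmul // u_e mul1r.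
Qed.

Definition g1 x y := f1 (e x) y.
Definition g2 x y := f3 (qop x y) (qop (qinv x) y) * f2 x y * f3 (e y) y.
Definition psi1 x y := f3 (qop x y) (qop (qinv x) y) *: phi1 x y.
Definition psi2 a b := f3 (qmul a b) (qmul (qinv b) (qinv a)) *: phi2 a b.

Lemma g1E x y : g1 x y = v (qop x y) * f1 x y * u x.
Proof. exact: G1. Qed.
Lemma g1K a b : qlab a = qlab b -> g1 a b = k (qinv b).
Proof. exact: K1. Qed.
Lemma g2E x y : g2 x y = v (qop x y) * f2 x y * u y.
Proof. by rewrite /g2 UE. Qed.
Lemma psi1E x y : psi1 x y = v (qop x y) *: phi1 x y.
Proof. by rewrite /psi1 UE. Qed.
Lemma psi2E a b : qlab a = qlab b -> psi2 a b = v (qmul a b) *: phi2 a b.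
Proof. by move=> Hab; rewrite /psi2 WE. Qed.

Lemma A1 a b : qlab a = qlab b -> g1 a b + g2 a b = g1 a (qmul (qinv a) b).
Proof.
move=> Hab.
rewrite g1K // g1K; last by rewrite lab_mul ?lab_inv.
rewrite g2E inv_mulV // kM; last by rewrite lab_inv.
rewrite (mcq_i Hab).
have E := h1ii a b Hab.
rewrite f3E ?f4E ?conj_mul // in E; try lab.
have E2 := congr1 (fun r => k (qinv b) * v (qmul a b) * r * u b) E.
rewrite /= !mulrDr !mulrDl !mulrA !vuK kVk mul1r in E2.
exact: E2.
Qed.

Lemma labop (x a b : car X) : qlab a = qlab b -> qlab (qop a x) = qlab (qop b x).
Proof. exact: mcq_iv1. Qed.

Lemma A2a a b x : qlab a = qlab b -> g1 a x = g1 b x.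
Proof. by move=> Hab; rewrite /g1 Hab. Qed.

Lemma A2b a b x : qlab a = qlab b ->
  g2 (qmul a b) x = g2 a x + g1 (qop b x) (qop (qinv a) x) * g2 b x.
Proof.
move=> Hab.
rewrite !g2E g1K; last by apply: labop; rewrite lab_inv.
rewrite inv_op_inv (h4iii a b x Hab) f3E ?f4E; try exact: labop.
rewrite -mcq_iv2 // mulrDr mulrDl !mulrA !vu !mul1r.
done.
Qed.

Lemma A3a x l : g1 x (qe l) = 1.
Proof. by rewrite g1E mcq_ii1 h2i mulr1 vu. Qed.

Lemma A3b x a b : qlab a = qlab b -> g1 x (qmul a b) = g1 (qop x a) b * g1 x a.
Proof.
move=> Hab; rewrite !g1E (h2ii x a b Hab) (mcq_ii2 x Hab).
by rewrite !mulrA uvK.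
Qed.

Lemma A3c x a b : qlab a = qlab b -> g2 x (qmul a b) = g1 (qop x a) b * g2 x a.
Proof.
move=> Hab.
have E := congr1 (fun r => r * u a) (h2iii x a b Hab).
rewrite /= f3E // !mulrA vuK in E.
by rewrite g2E g1E g2E (mcq_ii2 x Hab) -mulrA E !mulrA uvK.
Qed.

Lemma A4a x y z : g1 (qop x y) z * g1 x y = g1 (qop x z) (qop y z) * g1 x z.
Proof.
have E := congr1 (fun r => v (qop (qop x y) z) * r * u x) (h3i x y z).
rewrite /= !mulrA in E.
by rewrite !g1E -mcq_iii !mulrA !uvK.
Qed.

Lemma A4b x y z : g1 (qop x y) z * g2 x y = g2 (qop x z) (qop y z) * g1 y z.
Proof.
have E := congr1 (fun r => v (qop (qop x y) z) * r * u y) (h3ii x y z).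
rewrite /= !mulrA in E.
by rewrite !g1E !g2E -mcq_iii !mulrA !uvK.
Qed.

Lemma A4c x y z : g2 (qop x y) z
     = g1 (qop x z) (qop y z) * g2 x z + g2 (qop x z) (qop y z) * g2 y z.
Proof.
have E := congr1 (fun r => v (qop (qop x y) z) * r * u z) (h3iii x y z).
rewrite /= mulrDr mulrDl !mulrA in E.
by rewrite !g1E !g2E -mcq_iii !mulrA !uvK.
Qed.

Lemma T1 a b c : qlab a = qlab b -> qlab b = qlab c ->
  psi2 a b + psi2 (qmul a b) c = g1 a (qinv a) *: psi2 b c + psi2 a (qmul b c).
Proof.
move=> Hab Hbc.
rewrite !psi2E; try lab.
rewrite g1K ?lab_inv // invK.
have E := h0phi a b c Hab Hbc.
rewrite f3E ?f4E in E; try lab.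
rewrite Defs.mulA // in E *.
have E2 := congr1 (fun m => v (qmul a (qmul b c)) *: m) E.
rewrite /= !scalerDr !scalerA ?mulrA !vu !mul1r in E2.
by rewrite scalerA.
Qed.

Lemma T2 a b : qlab a = qlab b ->
  g1 b (qinv b) *: psi1 a b + psi2 b (qmul (qmul (qinv b) a) b) = psi2 a b.
Proof.
move=> Hab.
rewrite psi1E !psi2E; try lab.
rewrite g1K ?lab_inv // invK (mcq_i Hab) conj_mul //.
have E := h1phi a b Hab.
rewrite f4E ?conj_mul // in E; try lab.
have E2 := congr1 (fun m => v (qmul a b) *: m) E.
rewrite /= !scalerDr !scalerA ?mulrA !vu !mul1r in E2.
by rewrite scalerA.
Qed.

Lemma T3 x a b : qlab a = qlab b ->
  g2 x (qmul a b) *: psi2 a b + psi1 x (qmul a b)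
  = g1 (qop x a) b *: psi1 x a + psi1 (qop x a) b.
Proof.
move=> Hab.
rewrite g2E g1E !psi1E psi2E // (mcq_ii2 x Hab) !scalerA ?mulrA !uvK.
have E := congr1 (fun m => v (qop (qop x a) b) *: m) (h2phi2 x a b Hab).
by rewrite /= !scalerDr !scalerA ?mulrA in E.
Qed.

Lemma T4 x y z : g1 (qop x y) z *: psi1 x y + psi1 (qop x y) z
     = g1 (qop x z) (qop y z) *: psi1 x z + g2 (qop x z) (qop y z) *: psi1 y z
       + psi1 (qop x z) (qop y z).
Proof.
rewrite !g1E g2E !psi1E -mcq_iii !scalerA ?mulrA !uvK.
have E := congr1 (fun m => v (qop (qop x y) z) *: m) (h3phi x y z).
by rewrite /= !scalerDr !scalerA ?mulrA in E.
Qed.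

Lemma T5 a b x : qlab a = qlab b ->
     g1 (qmul a b) x *: psi2 a b + psi1 (qmul a b) x
     = psi1 a x + g1 (qop a x) (qop (qinv a) x) *: psi1 b x + psi2 (qop a x) (qop b x).
Proof.
move=> Hab.
rewrite g1E !psi1E !psi2E //; last exact: labop.
rewrite g1K; last by apply: labop; rewrite lab_inv.
rewrite inv_op_inv (mcq_iv2 x Hab) !scalerA ?mulrA !uvK.
have E := h4phi a b x Hab.
rewrite f3E ?f4E in E; try exact: labop.
have E2 := congr1 (fun m => v (qmul (qop a x) (qop b x)) *: m) E.
by rewrite /= !scalerDr !scalerA ?mulrA !vu !mul1r in E2.
Qed.

Lemma main : augmented_MCQ_Alexander_pair g1 g2 psi1 psi2.
Proof.
split.
  split; first exact: A1.
  split; first exact: A2a.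
  split; first exact: A2b.
  split; first exact: A3a.
  split; first exact: A3b.
  split; first exact: A3c.
  split; first exact: A4a.
  split; first exact: A4b.
  exact: A4c.
split; first exact: T1.
split; first exact: T2.
split; first exact: T3.
split; first exact: T4.
exact: T5.
Qed.
End Ring.

Theorem lemma4p2 (X : MCQ) (R : nzRingType) (M : lmodType R)
  (f1 f2 f3 f4 : car X -> car X -> R) (phi1 phi2 : car X -> car X -> M) :
  six_tuple_conditions f1 f2 f3 f4 phi1 phi2 ->
  augmented_MCQ_Alexander_pair
    (fun x y => f1 (qe (qlab x)) y)
    (fun x y => f3 (qop x y) (qop (qinv x) y) * f2 x y * f3 (qe (qlab y)) y)
    (fun x y => f3 (qop x y) (qop (qinv x) y) *: phi1 x y)
    (fun a b => f3 (qmul a b) (qmul (qinv b) (qinv a)) *: phi2 a b).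
Proof. move=> H; exact: (@main X R M f1 f2 f3 f4 phi1 phi2 H). Qed.
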